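(* Let $\{c_n\}_{n\ge1}$ be a real sequence, $\{d_{n+1}\}_{n\ge1}$ a positive chain sequence, and let $P_0(x)=1$, $P_1(x)=x-c_1$, $P_{n+1}(x)=(x-c_{n+1})P_n(x)-d_{n+1}(x^2+1)P_{n-1}(x)$ for $n\ge1$. Let $u_0(x)=1$, $u_n(x)=\dfrac{(-1)^n}{(x-i)^n\prod_{j=1}^n\sqrt{d_{j+1}}}P_n(x)$ for $n\ge1$, $\mathbf u_n(x)=[u_0(x),\dots,u_{n-1}(x)]^T$, and let $\mathbf B_n$ be the $n\times n$ real symmetric tridiagonal matrix with diagonal entries $1$ and $(\mathbf B_n)_{k,k+1}=(\mathbf B_n)_{k+1,k}=\sqrt{d_{k+1}}$, $k=1,\dots,n-1$. For real $x\ne y$ let \[ G_n(x,y)=\frac{P_n(x)P_{n-1}(y)-P_{n-1}(x)P_n(y)}{x-y},\qquad n\ge1, \] and let $\mathcal G_n(x)=P_n'(x)P_{n-1}(x)-P_{n-1}'(x)P_n(x)$. Then $G_1(x,y)=1$ and, for $n\ge2$ and real $x\neq y$, \[ \frac{G_n(x,y)}{(x-i)^{n-1}(y+i)^{n-1}d_2d_3\cdots d_n}=\mathbf u_n(y)^H\mathbf B_n\mathbf u_n(x). \] Moreover, for $n\ge2$ and all real $x$, \[ \frac{\mathcal G_n(x)}{(x^2+1)^{n-1}d_2d_3\cdots d_n}=\mathbf u_n(x)^H\mathbf B_n\mathbf u_n(x)>0 . \]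
   Context: A sequence $\{d_{n+1}\}_{n\ge1}$ is a positive chain sequence if there is a sequence $\{g_{n+1}\}_{n\ge0}$ with $0\le g_1<1$, $0<g_n<1$ for $n\ge2$, and $d_{n+1}=(1-g_n)g_{n+1}$ for $n\ge1$. $\mathbf v^H$ denotes the conjugate transpose. *)

(* Defs.v *)
From HB Require Import structures.
From mathcomp Require Import all_boot all_order all_algebra.
From mathcomp Require Import complex.
From mathcomp Require Import reals.
Set Implicit Arguments. Unset Strict Implicit. Unset Printing Implicit Defensive.
Import Order.TTheory GRing.Theory Num.Theory.
Local Open Scope ring_scope.
Local Open Scope complex_scope.

Definition positive_chain_seq (R : realType) (d : nat -> R) : Prop :=
  exists g : nat -> R,
    [/\ 0 <= g 1%N, g 1%N < 1,
        (forall n, (2 <= n)%N -> 0 < g n /\ g n < 1) &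
        (forall n, (1 <= n)%N -> d n.+1 = (1 - g n) * g n.+1)].

(* Ppair c d n = (P_n, P_{n+1}) *)
Fixpoint Ppair (R : realType) (c d : nat -> R) (n : nat) : {poly R} * {poly R} :=
  match n with
  | 0%N => (1, 'X - (c 1%N)%:P)
  | m.+1 => let pr := Ppair c d m in
            (pr.2, ('X - (c m.+2)%:P) * pr.2 - (d m.+2)%:P * ('X^2 + 1) * pr.1)
  end.

Definition Ppoly (R : realType) (c d : nat -> R) (n : nat) : {poly R} :=
  (Ppair c d n).1.

Definition Gker (R : realType) (c d : nat -> R) (n : nat) (x y : R) : R :=
  ((Ppoly c d n).[x] * (Ppoly c d n.-1).[y]
   - (Ppoly c d n.-1).[x] * (Ppoly c d n).[y]) / (x - y).

Definition calG (R : realType) (c d : nat -> R) (n : nat) (x : R) : R :=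
  (Ppoly c d n)^`().[x] * (Ppoly c d n.-1).[x]
  - (Ppoly c d n.-1)^`().[x] * (Ppoly c d n).[x].

Definition ufun (R : realType) (c d : nat -> R) (k : nat) (x : R) : R[i] :=
  if k is 0%N then 1 else
  (-1) ^+ k / ((x%:C - 'i) ^+ k * (\prod_(1 <= j < k.+1) Num.sqrt (d j.+1))%:C)
  * ((Ppoly c d k).[x])%:C.

Definition uvec (R : realType) (c d : nat -> R) (n : nat) (x : R) : 'cV[R[i]]_n :=
  \col_(k < n) ufun c d k x.

Definition Bmat (R : realType) (d : nat -> R) (n : nat) : 'M[R]_n :=
  \matrix_(k < n, l < n)
    if k == l then 1
    else if (k.+1 == l) then Num.sqrt (d k.+2)
    else if (l.+1 == k) then Num.sqrt (d l.+2)
    else 0.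

Definition herm_form (R : realType) (n : nat) (v : 'cV[R[i]]_n) (M : 'M[R]_n)
  (w : 'cV[R[i]]_n) : R[i] :=
  ((map_mx (fun z => z^*) v)^T *m map_mx (fun r => r%:C) M *m w) 0 0.

(* Main.v *)
Require Import Defs.
From HB Require Import structures.
From mathcomp Require Import all_boot all_order all_algebra.
From mathcomp Require Import complex.
From mathcomp Require Import reals.
From mathcomp Require Import ring lra zify.
Import Order.TTheory GRing.Theory Num.Theory.
Local Open Scope ring_scope.
Local Open Scope complex_scope.
Set Implicit Arguments. Unset Strict Implicit. Unset Printing Implicit Defensive.
Lemma Ppoly0 (R : realType) (c d : nat -> R) : Ppoly c d 0 = 1.
Proof. by []. Qed.
Lemma Ppoly1 (R : realType) (c d : nat -> R) : Ppoly c d 1 = 'X - (c 1%N)%:P.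
Proof. by []. Qed.
Lemma PpolyS (R : realType) (c d : nat -> R) n : Ppoly c d n.+2 =
  ('X - (c n.+2)%:P) * Ppoly c d n.+1 - (d n.+2)%:P * ('X^2 + 1) * Ppoly c d n.
Proof. by []. Qed.
Lemma Ppoly0x (R : realType) (c d : nat -> R) x : (Ppoly c d 0).[x] = 1.
Proof. by rewrite Ppoly0 -polyC1 hornerC. Qed.
Definition sq (R : realType) (d : nat -> R) k : R := \prod_(1 <= j < k.+1) Num.sqrt (d j.+1).
Definition Dn (R : realType) (d : nat -> R) n : R := \prod_(2 <= j < n.+1) d j.
Definition beta (R : realType) (d : nat -> R) (k l : nat) : R :=
  if k == l then 1 else if k.+1 == l then Num.sqrt (d k.+2)
  else if l.+1 == k then Num.sqrt (d l.+2) else 0.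
Definition fv (R : realType) (d : nat -> R) (A : R[i]) (p : nat -> R) k : R[i] :=
  (-1) ^+ k / (A ^+ k * (sq d k)%:C) * (p k)%:C.
Definition Hs (R : realType) (d : nat -> R) (g f : nat -> R[i]) n : R[i] :=
  \sum_(0 <= l < n) \sum_(0 <= k < n) g k * (beta d k l)%:C * f l.

Lemma Hs_S (R : realType) (d : nat -> R) g f n :
  Hs d g f n.+1 = Hs d g f n + \sum_(0 <= l < n) g n * (beta d n l)%:C * f l
   + \sum_(0 <= k < n) g k * (beta d k n)%:C * f n + g n * (beta d n n)%:C * f n.
Proof.
rewrite /Hs big_nat_recr //= big_nat_recr //=.
under eq_bigr do rewrite big_nat_recr //=.
rewrite big_split /=. ring.
Qed.

Lemma beta_col (R : realType) (d : nat -> R) (h : nat -> R[i]) m :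
  \sum_(0 <= k < m.+1) h k * (beta d k m.+1)%:C = h m * (Num.sqrt (d m.+2))%:C.
Proof.
rewrite big_nat_recr //= big1_seq ?add0r.
  by rewrite /beta eqn_leq ltnn /= andbF eqxx.
move=> k /andP[_]; rewrite mem_index_iota => /andP[_ hk].
rewrite /beta.
have -> : (k == m.+1) = false by apply/negbTE; lia.
have -> : (k.+1 == m.+1) = false by apply/negbTE; lia.
have -> : (m.+2 == k) = false by apply/negbTE; lia.
by rewrite mulr0.
Qed.

Lemma beta_row (R : realType) (d : nat -> R) (h : nat -> R[i]) m :
  \sum_(0 <= l < m.+1) (beta d m.+1 l)%:C * h l = (Num.sqrt (d m.+2))%:C * h m.
Proof.
rewrite big_nat_recr //= big1_seq ?add0r.
  rewrite /beta; have -> : (m.+1 == m) = false by apply/negbTE; lia.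
  have -> : (m.+2 == m) = false by apply/negbTE; lia.
  by rewrite eqxx.
move=> k /andP[_]; rewrite mem_index_iota => /andP[_ hk].
rewrite /beta.
have -> : (m.+1 == k) = false by apply/negbTE; lia.
have -> : (m.+2 == k) = false by apply/negbTE; lia.
have -> : (k.+1 == m.+1) = false by apply/negbTE; lia.
by rewrite mul0r.
Qed.

Lemma Hs_SS (R : realType) (d : nat -> R) g f m :
  Hs d g f m.+2 = Hs d g f m.+1 + g m.+1 * f m.+1
   + (Num.sqrt (d m.+2))%:C * (g m * f m.+1 + g m.+1 * f m).
Proof.
rewrite Hs_S.
have e1 : \sum_(0 <= l < m.+1) g m.+1 * (beta d m.+1 l)%:C * f l
   = g m.+1 * ((Num.sqrt (d m.+2))%:C * f m).
  rewrite -beta_row big_distrr /=; apply: eq_bigr => l _; ring.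
have e2 : \sum_(0 <= k < m.+1) g k * (beta d k m.+1)%:C * f m.+1
   = (g m * (Num.sqrt (d m.+2))%:C) * f m.+1.
  rewrite -beta_col big_distrl /=; apply: eq_bigr => l _; ring.
rewrite e1 e2 /beta eqxx mulr1; ring.
Qed.

Lemma Hs1 (R : realType) (d : nat -> R) g f : Hs d g f 1 = g 0%N * f 0%N.
Proof. by rewrite /Hs !big_nat1 /beta eqxx mulr1. Qed.
Lemma sqS (R : realType) (d : nat -> R) k : sq d k.+1 = sq d k * Num.sqrt (d k.+2).
Proof. by rewrite /sq big_nat_recr. Qed.
Lemma sq0 (R : realType) (d : nat -> R) : sq d 0 = 1.
Proof. by rewrite /sq big_geq. Qed.
Lemma DnS (R : realType) (d : nat -> R) k : Dn d k.+2 = Dn d k.+1 * d k.+2.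
Proof. by rewrite /Dn big_nat_recr. Qed.
Lemma Dn1 (R : realType) (d : nat -> R) : Dn d 1 = 1.
Proof. by rewrite /Dn big_geq. Qed.
Lemma sq2 (R : realType) (d : nat -> R) k : (forall j, (2 <= j)%N -> 0 < d j) ->
  sq d k ^+ 2 = Dn d k.+1.
Proof.
move=> hd; elim: k => [|k IH]; first by rewrite sq0 Dn1 expr1n.
by rewrite sqS DnS exprMn IH sqr_sqrtr // ltW // hd.
Qed.
Lemma sq_gt0 (R : realType) (d : nat -> R) k : (forall j, (2 <= j)%N -> 0 < d j) ->
  0 < sq d k.
Proof.
move=> hd; elim: k => [|k IH]; first by rewrite sq0.
by rewrite sqS mulr_gt0 // sqrtr_gt0 hd.
Qed.
Lemma Dn_gt0 (R : realType) (d : nat -> R) k : (forall j, (2 <= j)%N -> 0 < d j) ->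
  0 < Dn d k.+1.
Proof. by move=> hd; rewrite -sq2 // exprn_gt0 // sq_gt0. Qed.
Lemma realC_neq0 (R : realType) (x : R) : ((x%:C : R[i]) != 0) = (x != 0).
Proof. by rewrite fmorph_eq0. Qed.

Lemma Hs_formula (R : realType) (d : nat -> R) (A B : R[i]) (p q : nat -> R)
  (K : nat -> R[i]) :
  A != 0 -> B != 0 -> (forall j, (2 <= j)%N -> 0 < d j) -> p 0%N = 1 -> q 0%N = 1 ->
  K 1%N = 1 ->
  (forall n, (0 < n)%N -> K n.+1 = A * B * (d n.+1)%:C * K n + (p n * q n)%:C
      - (d n.+1)%:C * (B * (q n.-1 * p n)%:C + A * (p n.-1 * q n)%:C)) ->
  forall n, (0 < n)%N ->
  Hs d (fv d B q) (fv d A p) n = K n / (A ^+ n.-1 * B ^+ n.-1 * (Dn d n)%:C).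
Proof.
move=> hA hB hd p0 q0 K1 KS; case=> // n _; elim: n => [|m IH].
  by rewrite Hs1 /fv p0 q0 K1 Dn1 sq0 !expr0 !mul1r !invr1 !mulr1.
rewrite Hs_SS IH // (KS m.+1) //= /fv sqS DnS -sq2 //.
have hs : sq d m != 0 by rewrite gt_eqF // sq_gt0.
have hr : Num.sqrt (d m.+2) != 0 by rewrite gt_eqF // sqrtr_gt0 hd.
have hdd : d m.+2 = Num.sqrt (d m.+2) ^+ 2 by rewrite sqr_sqrtr // ltW // hd.
move: hs hr; set s := sq d m; set r := Num.sqrt (d m.+2) => hs hr.
rewrite hdd !exprS !rmorphM !rmorphXn /=.
rewrite -signr_odd; case: (odd m); rewrite ?expr1 ?expr0.
- field. by rewrite !realC_neq0 hs hr hA hB !expf_neq0.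
- field. by rewrite !realC_neq0 hs hr hA hB !expf_neq0.
Qed.
Lemma herm_Hs (R : realType) (c d : nat -> R) n x y :
  herm_form (uvec c d n y) (Bmat d n) (uvec c d n x) =
  Hs d (fun k => (ufun c d k y)^*) (fun k => ufun c d k x) n.
Proof.
rewrite /herm_form /Hs big_mkord mxE; apply: eq_bigr => l _.
rewrite big_mkord mxE big_distrl /=; apply: eq_bigr => k _.
by rewrite !mxE.
Qed.

Lemma ufun_fv (R : realType) (c d : nat -> R) x k :
  ufun c d k x = fv d (x%:C - 'i) (fun j => (Ppoly c d j).[x]) k.
Proof.
case: k => [|k] //; by rewrite /fv /= expr0 sq0 rmorph1 !mul1r invr1 Ppoly0x rmorph1 mulr1.
Qed.

Lemma conjcM (R : realType) (z w : R[i]) : Num.conj (z * w) = Num.conj z * Num.conj w.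
Proof. exact: rmorphM. Qed.
Lemma conjcX (R : realType) (z : R[i]) k : Num.conj (z ^+ k) = Num.conj z ^+ k.
Proof. exact: rmorphXn. Qed.
Lemma conjcB (R : realType) (z w : R[i]) : Num.conj (z - w) = Num.conj z - Num.conj w.
Proof. exact: rmorphB. Qed.
Lemma conjcV (R : realType) (z : R[i]) : Num.conj (z^-1) = (Num.conj z)^-1.
Proof. exact: fmorphV. Qed.
Lemma conjcN1 (R : realType) : Num.conj (-1 : R[i]) = -1.
Proof. by rewrite rmorphN rmorph1. Qed.
Lemma conjcR (R : realType) (x : R) : Num.conj (x%:C : R[i]) = x%:C.
Proof. exact: conjc_real. Qed.
Lemma conjcI (R : realType) : Num.conj (Num.imaginary : R[i]) = - Num.imaginary.
Proof. exact: conjCi. Qed.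

Lemma ufun_conj (R : realType) (c d : nat -> R) x k :
  Num.conj (ufun c d k x) = fv d (x%:C + 'i) (fun j => (Ppoly c d j).[x]) k.
Proof.
rewrite ufun_fv /fv !(conjcM, conjcV, conjcX, conjcB, conjcN1, conjcR, conjcI).
by rewrite opprK.
Qed.
Lemma crec (R : realType) (x y dd G1 G2 P1 Q1 P0 Q0 : R) :
  G2 = (x*y+1)*dd*G1 + P1*Q1 - dd*(y*(Q0*P1) + x*(P0*Q1)) ->
  (x-y)*dd*G1 - dd*(Q0*P1 - P0*Q1) = 0 ->
  (G2%:C : R[i]) = (x%:C - 'i)*(y%:C+'i)*dd%:C*G1%:C + (P1*Q1)%:C
     - dd%:C*((y%:C+'i)*(Q0*P1)%:C + (x%:C - 'i)*(P0*Q1)%:C).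
Proof.
move=> h1 h2; apply/eqP; rewrite eq_complex /=; apply/andP; split; apply/eqP.
  rewrite h1; ring.
rewrite -{1}h2; ring.
Qed.

Lemma PpolySx (R : realType) (c d : nat -> R) n x : (Ppoly c d n.+2).[x] =
  (x - c n.+2) * (Ppoly c d n.+1).[x] - d n.+2 * (x ^+ 2 + 1) * (Ppoly c d n).[x].
Proof. by rewrite PpolyS !hornerE. Qed.

Lemma Gker_rec (R : realType) (c d : nat -> R) x y n : x != y -> (0 < n)%N ->
  ((Gker c d n.+1 x y)%:C : R[i]) = (x%:C - 'i) * (y%:C + 'i) * (d n.+1)%:C * (Gker c d n x y)%:C
   + ((Ppoly c d n).[x] * (Ppoly c d n).[y])%:C
   - (d n.+1)%:C * ((y%:C + 'i) * ((Ppoly c d n.-1).[y] * (Ppoly c d n).[x])%:C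
       + (x%:C - 'i) * ((Ppoly c d n.-1).[x] * (Ppoly c d n).[y])%:C).
Proof.
move=> hxy; case: n => // m _; rewrite /Gker /= !PpolySx; apply: crec.
- field. by rewrite subr_eq0.
- field. by rewrite subr_eq0.
Qed.

Lemma Gker1 (R : realType) (c d : nat -> R) x y : x != y -> Gker c d 1 x y = 1.
Proof.
move=> hxy; rewrite /Gker /= Ppoly1 !Ppoly0x !hornerE.
field. by rewrite subr_eq0.
Qed.

Lemma dPpolySx (R : realType) (c d : nat -> R) n x : (Ppoly c d n.+2)^`().[x] =
  (Ppoly c d n.+1).[x] + (x - c n.+2) * (Ppoly c d n.+1)^`().[x]
  - d n.+2 * (2 * x * (Ppoly c d n).[x] + (x ^+ 2 + 1) * (Ppoly c d n)^`().[x]).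
Proof. rewrite PpolyS !derivE !hornerE /=. ring. Qed.

Lemma calG_rec (R : realType) (c d : nat -> R) x n : (0 < n)%N ->
  ((calG c d n.+1 x)%:C : R[i]) = (x%:C - 'i) * (x%:C + 'i) * (d n.+1)%:C * (calG c d n x)%:C
   + ((Ppoly c d n).[x] * (Ppoly c d n).[x])%:C
   - (d n.+1)%:C * ((x%:C + 'i) * ((Ppoly c d n.-1).[x] * (Ppoly c d n).[x])%:C
       + (x%:C - 'i) * ((Ppoly c d n.-1).[x] * (Ppoly c d n).[x])%:C).
Proof.
case: n => // m _; rewrite /calG /= !PpolySx dPpolySx; apply: crec; ring.
Qed.

Lemma calG1 (R : realType) (c d : nat -> R) x : calG c d 1 x = 1.
Proof. by rewrite /calG /= Ppoly1 Ppoly0 !derivE !hornerE /= subr0. Qed.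

Lemma conj_mul_self (R : realType) (a b : R) :
  Num.conj (a +i* b) * (a +i* b) = (a ^+ 2 + b ^+ 2)%:C.
Proof. apply/eqP; rewrite eq_complex /=; apply/andP; split; apply/eqP; ring. Qed.

Lemma conj_cross (R : realType) (a1 a2 b1 b2 : R) :
  Num.conj (a1 +i* a2) * (b1 +i* b2) + Num.conj (b1 +i* b2) * (a1 +i* a2)
  = (2 * (a1 * b1 + a2 * b2))%:C.
Proof. apply/eqP; rewrite eq_complex /=; apply/andP; split; apply/eqP; ring. Qed.

Lemma step_real (R : realType) (Q g g' s a1 a2 b1 b2 : R) :
  0 <= 1 - g -> 0 < g' -> g' < 1 -> s ^+ 2 = (1 - g) * g' -> 0 <= s ->
  0 <= Q - (1 - g) * (a1 ^+ 2 + a2 ^+ 2) -> 0 < Q ->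
  0 <= (Q + (b1 ^+ 2 + b2 ^+ 2) + s * (2 * (a1 * b1 + a2 * b2)))
        - (1 - g') * (b1 ^+ 2 + b2 ^+ 2) /\
  0 < Q + (b1 ^+ 2 + b2 ^+ 2) + s * (2 * (a1 * b1 + a2 * b2)).
Proof.
move=> h1 h2 h3 hs hs0 hQ hQ0.
set al := (1 - g) * (a1 ^+ 2 + a2 ^+ 2).
set be := g' * (b1 ^+ 2 + b2 ^+ 2).
set t := s * (2 * (a1 * b1 + a2 * b2)).
have hal : 0 <= al by rewrite /al; have := sqr_ge0 a1; have := sqr_ge0 a2; nra.
have hbe : 0 <= be by rewrite /be; have := sqr_ge0 b1; have := sqr_ge0 b2; nra.
have ht2 : t ^+ 2 <= 4 * al * be.
  rewrite /t /al /be exprMn hs.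
  have cs : (a1 * b1 + a2 * b2) ^+ 2 <= (a1 ^+ 2 + a2 ^+ 2) * (b1 ^+ 2 + b2 ^+ 2).
    have := sqr_ge0 (a1 * b2 - a2 * b1). nra.
  have hgg : 0 <= (1 - g) * g' by nra.
  have := ler_wpM2l hgg cs. nra.
have ht : 0 <= al + be + t.
  have h4 : t ^+ 2 <= (al + be) ^+ 2 by have := sqr_ge0 (al - be); nra.
  have [ht0|ht0] := lerP 0 t; first nra.
  have hu : 0 < al + be - t by nra.
  have h5 : 0 <= (al + be + t) * (al + be - t) by nra.
  by rewrite -(pmulr_lge0 _ hu).
have hN : 0 <= b1 ^+ 2 + b2 ^+ 2 by have := sqr_ge0 b1; have := sqr_ge0 b2; nra.
have e1 : Q + (b1 ^+ 2 + b2 ^+ 2) + t - (1 - g') * (b1 ^+ 2 + b2 ^+ 2)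
   = (Q - al) + (al + be + t) by rewrite /al /be; ring.
have e2 : Q + (b1 ^+ 2 + b2 ^+ 2) + t
   = (Q - al) + (al + be + t) + (1 - g') * (b1 ^+ 2 + b2 ^+ 2) by rewrite /al /be; ring.
split; first by rewrite e1 addr_ge0.
have [hz|hp] := eqVneq (b1 ^+ 2 + b2 ^+ 2) 0.
  have hb1 : b1 = 0 by apply/eqP; rewrite -sqrf_eq0; apply/eqP; have := sqr_ge0 b1; have := sqr_ge0 b2; lra.
  have hb2 : b2 = 0 by apply/eqP; rewrite -sqrf_eq0; apply/eqP; have := sqr_ge0 b1; have := sqr_ge0 b2; lra.
  rewrite /t hb1 hb2 expr0n /= !mulr0 !addr0; lra.
have hp' : 0 < b1 ^+ 2 + b2 ^+ 2 by rewrite lt_neqAle eq_sym hp hN.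
rewrite e2; have : 0 < (1 - g') * (b1 ^+ 2 + b2 ^+ 2) by rewrite mulr_gt0 // subr_gt0.
have hQ' : 0 <= Q - al by exact: hQ.
move: ht hQ'; generalize (Q - al) (al + be + t) ((1 - g') * (b1 ^+ 2 + b2 ^+ 2)).
move=> u v w; lra.
Qed.
Definition nrm (R : realType) (z : R[i]) : R := let: a +i* b := z in a ^+ 2 + b ^+ 2.

Lemma Hs_pos (R : realType) (d g : nat -> R) (v : nat -> R[i]) :
  0 <= g 1%N -> g 1%N < 1 -> (forall n, (2 <= n)%N -> 0 < g n /\ g n < 1) ->
  (forall n, (1 <= n)%N -> d n.+1 = (1 - g n) * g n.+1) -> v 0%N = 1 ->
  forall m, exists Q : R, Hs d (fun k => Num.conj (v k)) v m.+1 = Q%:C /\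
     0 <= Q - (1 - g m.+1) * nrm (v m) /\ 0 < Q.
Proof.
move=> g10 g11 hg hd v0; elim=> [|m [Q [hH [hQ1 hQ2]]]].
  exists 1; rewrite Hs1 v0 /nrm /= conjC1 mulr1; split=> //; split => //; lra.
have hgm : 0 <= 1 - g m.+1.
  case: m {hH hQ1} => [|m]; first lra.
  by have [_ /ltW] := hg m.+2 isT; rewrite subr_ge0.
have [hg2a hg2b] := hg m.+2 isT.
have hdd : d m.+2 = (1 - g m.+1) * g m.+2 := hd m.+1 isT.
have hdpos : 0 <= d m.+2 by rewrite hdd mulr_ge0 // ltW.
rewrite Hs_SS hH /=.
move: hQ1; case: (v m) => a1 a2; case: (v m.+1) => b1 b2 => hQ1 /=.
rewrite conj_mul_self conj_cross -!rmorphM -!rmorphD.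
have hs2 : Num.sqrt (d m.+2) ^+ 2 = (1 - g m.+1) * g m.+2 by rewrite sqr_sqrtr.
rewrite /nrm in hQ1.
have [h1 h2] := @step_real R Q (g m.+1) (g m.+2) (Num.sqrt (d m.+2)) a1 a2 b1 b2 hgm hg2a hg2b hs2 (sqrtr_ge0 _) hQ1 hQ2.
by eexists; split; first reflexivity.
Qed.
Lemma conjcE (R : realType) (z : R[i]) : z^* = Num.conj z.
Proof. by []. Qed.

Lemma Hs_ext (R : realType) (d : nat -> R) g g' f f' n :
  g =1 g' -> f =1 f' -> Hs d g f n = Hs d g' f' n.
Proof.
move=> hg hf; rewrite /Hs; apply: eq_bigr => l _; apply: eq_bigr => k _.
by rewrite hg hf.
Qed.

Lemma A_neq0 (R : realType) (x : R) : (x%:C - 'i : R[i]) != 0.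
Proof. by rewrite eq_complex /= sub0r oppr_eq0 oner_eq0 andbF. Qed.
Lemma B_neq0 (R : realType) (x : R) : (x%:C + 'i : R[i]) != 0.
Proof. by rewrite eq_complex /= add0r oner_eq0 andbF. Qed.
Lemma AB_sq (R : realType) (x : R) : ((x ^+ 2 + 1)%:C : R[i]) = (x%:C - 'i) * (x%:C + 'i).
Proof. apply/eqP; rewrite eq_complex /=; apply/andP; split; apply/eqP; ring. Qed.

Theorem theorem3p1 (R : realType) (c d : nat -> R) :
  positive_chain_seq d ->
  (forall x y : R, x != y -> Gker c d 1 x y = 1) /\
  (forall (n : nat) (x y : R), (2 <= n)%N -> x != y ->
     (Gker c d n x y)%:C /
       ((x%:C - 'i) ^+ n.-1 * (y%:C + 'i) ^+ n.-1 *
        (\prod_(2 <= j < n.+1) d j)%:C)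
     = herm_form (uvec c d n y) (Bmat d n) (uvec c d n x)) /\
  (forall (n : nat) (x : R), (2 <= n)%N ->
     (calG c d n x)%:C /
       (((x ^+ 2 + 1) ^+ n.-1) * \prod_(2 <= j < n.+1) d j)%:C
     = herm_form (uvec c d n x) (Bmat d n) (uvec c d n x) /\
     0 < herm_form (uvec c d n x) (Bmat d n) (uvec c d n x)).
Proof.
move=> [g [g10 g11 hg hd]].
have hdp : forall j, (2 <= j)%N -> 0 < d j.
  case=> [|[|j]] // _; rewrite hd //.
  apply: mulr_gt0; last by case: (hg j.+2 isT).
  case: j => [|j]; first by rewrite subr_gt0.
  by case: (hg j.+2 isT) => _ b; rewrite subr_gt0.
split; first exact: Gker1.
split.
  move=> n x y hn hxy; rewrite herm_Hs.
  rewrite (@Hs_ext R d _ (fv d (y%:C + 'i) (fun j => (Ppoly c d j).[y]))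
                  _ (fv d (x%:C - 'i) (fun j => (Ppoly c d j).[x]))); last first.
  - by move=> k; rewrite ufun_fv.
  - by move=> k; rewrite conjcE ufun_conj.
  rewrite (@Hs_formula R d _ _ _ _ (fun n => (Gker c d n x y)%:C)) ?A_neq0 ?B_neq0 ?Ppoly0x //.
  - by rewrite Gker1 // rmorph1.
  - by move=> k hk; rewrite Gker_rec.
  - by apply: leq_trans hn.
move=> n x hn.
have -> : (((x ^+ 2 + 1) ^+ n.-1) * \prod_(2 <= j < n.+1) d j)%:C =
   (x%:C - 'i) ^+ n.-1 * (x%:C + 'i) ^+ n.-1 * (Dn d n)%:C :> R[i].
  by rewrite -exprMn -AB_sq -rmorphXn -rmorphM.
rewrite herm_Hs.
have hpos := Hs_pos g10 g11 hg hd (v := fun k => ufun c d k x) erefl.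
split; last first.
  case: n hn => [|m] // _.
  have [Q [hH [_ hQ]]] := hpos m.
  have -> : Hs d (fun k => (ufun c d k x)^*) (fun k => ufun c d k x) m.+1 = Q%:C.
    exact: hH.
  by rewrite ltcR.
rewrite (@Hs_ext R d _ (fv d (x%:C + 'i) (fun j => (Ppoly c d j).[x]))
                _ (fv d (x%:C - 'i) (fun j => (Ppoly c d j).[x]))); last first.
- by move=> k; rewrite ufun_fv.
- by move=> k; rewrite conjcE ufun_conj.
rewrite (@Hs_formula R d _ _ _ _ (fun n => (calG c d n x)%:C)) ?A_neq0 ?B_neq0 ?Ppoly0x //.
- by rewrite calG1 // rmorph1.
- by move=> k hk; rewrite calG_rec.
- by apply: leq_trans hn.
Qed.
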